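(* Under the assumptions below, the entries of the bidiagonal factors of $\mathscr T_N$ are given by \[ U_{b,n}=-\frac{\tau^B_{b-1,n}\,\tau^B_{b,n+1}}{\tau^B_{b-1,n+1}\,\tau^B_{b,n}},\qquad b\in\{1,\dots,q\},\ n\in\{0,1,\dots,N-b-1\}, \] \[ L_{a,n+1}=-\frac{\tau^A_{a-1,n+2}\,\tau^A_{a,n}}{\tau^A_{a-1,n+1}\,\tau^A_{a,n+1}},\qquad a\in\{1,\dots,p\},\ n\in\{0,1,\dots,N-a-1\}. \]
   Context: Let $p,q\in\mathbb N$ and let $\mu=(\mu_{i,j})$ be a $q\times p$ matrix of measures on $\mathbb R$. For $r,M\in\mathbb N$ let $X^{[M]}_{[r]}(x)$ be the $M\times r$ matrix of monomials whose row $i$ ($i=0,1,\dots,M-1$) is $x^{\lfloor i/r\rfloor}e_{(i \bmod r)+1}^\top$ (i.e. the first $M$ rows of the block column $I_r, xI_r, x^2I_r,\dots$). For $N,M\in\mathbb N$ put $\mathscr M^{[N,M]}=\int X^{[N]}_{[q]}(x)\,\mathrm d\mu(x)\,\big(X^{[M]}_{[p]}(x)\big)^\top$ and $\mathscr M_N=\mathscr M^{[N,N]}$. Assume $\mathscr M_N$ has a Gauss--Borel factorization $\mathscr M_N=\mathscr L_N^{-1}\mathscr U_N^{-1}$ with $\mathscr L_N$ lower unitriangular and $\mathscr U_N$ nonsingular upper triangular. Define the polynomial matrices $B^{[N]}=\mathscr L_N X^{[N]}_{[q]}$ (an $N\times q$ matrix with entries $B^{(j)}_n(x)$, row $n\in\{0,\dots,N-1\}$,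 column $j\in\{1,\dots,q\}$) and $A^{[N]}=\big(X^{[N]}_{[p]}\big)^\top\mathscr U_N$ (a $p\times N$ matrix with entries $A^{(i)}_n(x)$, row $i\in\{1,\dots,p\}$, column $n$). Let $\Lambda^{[N,N+q]}_{[q]}$ be the $N\times(N+q)$ matrix with entries $\delta_{j,i+q}$, and define the banded recursion matrix (with $q$ superdiagonals and $p$ subdiagonals) $\mathscr T_N=\mathscr L_N\Lambda^{[N,N+q]}_{[q]}\mathscr M^{[N+q,N]}\mathscr U_N$. For $r\in\mathbb N$ let $\mathfrak X_{[r,1]}(x)$ be the $r\times r$ matrix whose first $r-1$ rows are $\begin{bmatrix}0_{(r-1)\times1} & I_{r-1}\end{bmatrix}$ and whose last row is $\begin{bmatrix}x&0&\cdots&0\end{bmatrix}$. Define Christoffel-perturbed measures $\mathrm d\mu_{(n,m)}=\mathfrak X_{[q,1]}^n\,\mathrm d\mu\,\big(\mathfrak X_{[p,1]}^m\big)^\top$, their moment matrices $\mathscr M_{N,(n,m)}=\int X^{[N]}_{[q]}\,\mathrm d\mu_{(n,m)}\,(X^{[N]}_{[p]})^\top$, and assume each $\mathscr M_{N,(b,0)}$, $b\in\{1,\dots,q\}$, and $\mathscr M_{N,(0,a)}$, $a\in\{1,\dots,p\}$, admits a Gauss--Borel factorization $\mathscr M_{N,(n,m)}=\mathscr L_{N,(n,m)}^{-1}\mathscr U_{N,(n,m)}^{-1}$ (lower unitriangular / upper triangular). Then $\mathscr T_N=L_1\cdots L_pU_q\cdots U_1$ with $U_b=\mathscr U_{N,(b,0)}^{-1}\mathscr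 U_{N,(b-1,0)}$ upper bidiagonal with diagonal entries $U_{b,0},\dots,U_{b,N-1}$ and all superdiagonal entries equal to $1$, and $L_a=\mathscr L_{N,(0,a-1)}\mathscr L_{N,(0,a)}^{-1}$ lower bidiagonal with unit diagonal and subdiagonal entries $L_{a,1},\dots,L_{a,N-1}$. The $\tau$-determinants are \[ \tau^B_{b,n}=\det\begin{bmatrix}B^{(1)}_n(0)&\cdots&B^{(b)}_n(0)\\ \vdots&&\vdots\\ B^{(1)}_{n+b-1}(0)&\cdots&B^{(b)}_{n+b-1}(0)\end{bmatrix},\qquad \tau^A_{a,n}=\det\begin{bmatrix}A^{(1)}_{n+a-1}(0)&\cdots&A^{(1)}_n(0)\\ \vdots&&\vdots\\ A^{(a)}_{n+a-1}(0)&\cdots&A^{(a)}_n(0)\end{bmatrix}, \] with $\tau^A_{0,n}=\tau^B_{0,n}=1$; their nonvanishing is equivalent to the existence of the transformed orthogonality for $\mathrm d\mu_{(b,0)}$ and $\mathrm d\mu_{(0,a)}$. *)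

(* Defs.v *)
From HB Require Import structures.
From mathcomp Require Import all_boot all_order all_algebra.
From mathcomp Require Import all_classical all_reals all_analysis.

Set Implicit Arguments.
Unset Strict Implicit.
Unset Printing Implicit Defensive.

Import Order.TTheory GRing.Theory Num.Theory.
Local Open Scope ring_scope.

Section MOP.
Variable R : realType.

Definition ent (T : zmodType) (m n : nat) (A : 'M[T]_(m, n)) (i j : nat) : T :=
  match (insub i : option 'I_m), (insub j : option 'I_n) with
  | Some i', Some j' => A i' j'
  | _, _ => 0
  end.

Definition Xmon (r M : nat) : 'M[{poly R}]_(M, r) :=
  \matrix_(i < M, j < r) (if (i %% r)%N == j then 'X^(i %/ r) else 0).

Definition Xfrak (r : nat) : 'M[{poly R}]_r :=
  \matrix_(i < r, j < r)
    ((if i.+1 == j :> nat then 1 else 0) +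
     (if (i == r.-1 :> nat) && (j == 0 :> nat) then 'X else 0)).

(* a real signed measure given as mup - mun (two finite positive measures);
   integral of a polynomial against it *)
Definition sint (mup mun : {measure set R -> \bar R}) (P : {poly R}) : R :=
  Rintegral mup setT (fun x => P.[x]) - Rintegral mun setT (fun x => P.[x]).

Definition momM (q p : nat) (mup mun : 'I_q -> 'I_p -> {measure set R -> \bar R})
    (n m N : nat) : 'M[R]_N :=
  let W := Xmon q N *m (Xfrak q ^+ n) in
  let V := Xmon p N *m (Xfrak p ^+ m) in
  \matrix_(i < N, j < N)
    \sum_(c < q) \sum_(d < p) sint (mup c d) (mun c d) (W i c * V j d).

Definition GaussBorel (N : nat) (M L U : 'M[R]_N) : Prop :=
  [/\ (forall i j : 'I_N, (i < j)%N -> L i j = 0),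
      (forall i : 'I_N, L i i = 1),
      (forall i j : 'I_N, (j < i)%N -> U i j = 0),
      U \in unitmx &
      M = invmx L *m invmx U].

Definition Bmat (q N : nat) (L : 'M[R]_N) : 'M[{poly R}]_(N, q) :=
  map_mx polyC L *m Xmon q N.
Definition Amat (p N : nat) (U : 'M[R]_N) : 'M[{poly R}]_(p, N) :=
  (Xmon p N)^T *m map_mx polyC U.

(* tau^B_{b,n}: entry (r,c) = B^{(c+1)}_{n+r}(0) *)
Definition tauB (q N : nat) (L : 'M[R]_N) (b n : nat) : R :=
  \det (\matrix_(r < b, c < b) (ent (Bmat q L) (n + r) c).[0]).
(* tau^A_{a,n}: entry (r,c) = A^{(r+1)}_{n+a-1-c}(0) *)
Definition tauA (p N : nat) (U : 'M[R]_N) (a n : nat) : R :=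
  \det (\matrix_(r < a, c < a) (ent (Amat p U) r (n + (a - 1 - c))).[0]).

Definition Ufactor (N : nat) (UU : nat -> nat -> 'M[R]_N) (b : nat) : 'M[R]_N :=
  invmx (UU b 0%N) *m UU b.-1 0%N.
Definition Lfactor (N : nat) (LL : nat -> nat -> 'M[R]_N) (a : nat) : 'M[R]_N :=
  LL 0%N a.-1 *m invmx (LL 0%N a).

End MOP.

(* Main.v *)
Require Import Defs.
From HB Require Import structures.
From mathcomp Require Import all_boot all_order all_algebra.
From mathcomp Require Import all_classical all_reals all_analysis.
From mathcomp Require Import ring zify.
Import Order.TTheory GRing.Theory Num.Theory.
Local Open Scope ring_scope.

Set Implicit Arguments. Unset Strict Implicit. Unset Printing Implicit Defensive.

Section Gen.
Variable F : fieldType.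

Lemma sum_delta K (f : nat -> F) c : (c < K)%N ->
  \sum_(k < K) f k * ((k : nat) == c)%:R = f c.
Proof.
move=> hc; rewrite (bigD1 (Ordinal hc)) //= eqxx mulr1 big1 ?addr0 // => k hk.
suff -> : (k == c :> nat) = false by rewrite mulr0.
by apply/negbTE; apply: contra hk => /eqP h; apply/eqP/val_inj.
Qed.

Lemma sign_det (b K n : nat) (f : nat -> nat -> F) : K = (b + n)%N ->
  \det (\matrix_(i < K, j < K) (if (j < n)%N then f i j else ((i : nat) == (j - n)%N)%:R)) =
  (-1) ^+ (n * b) * \det (\matrix_(i < n, j < n) f (i + b)%N j).
Proof.
elim: b K f => [|b IH] K f.
  rewrite add0n => ->; rewrite muln0 expr0 mul1r; congr (\det _).
  by apply/matrixP => i j; rewrite !mxE (ltn_ord j) addn0.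
rewrite addSn => ->.
rewrite (expand_det_col _ ord_max).
have hb : (b < (b + n).+1)%N by rewrite ltnS leq_addr.
rewrite (bigD1 (Ordinal hb)) //= big1 ?addr0; last first.
  move=> i hi; rewrite !mxE /= ltnNge leq_addl /= addnK.
  suff -> : (i == b :> nat) = false by rewrite mul0r.
  by apply/negbTE; apply: contra hi => /eqP h; apply/eqP/val_inj.
rewrite !mxE /= ltnNge leq_addl /= addnK eqxx mul1r /cofactor.
have -> : row' (Ordinal hb) (col' ord_max
             (\matrix_(i < (b + n).+1, j < (b + n).+1) (if (j < n)%N then f i j
              else ((i : nat) == (j - n)%N)%:R))) =
   \matrix_(i < b + n, j < b + n) (if (j < n)%N then f (bump b i) j
              else ((i : nat) == (j - n)%N)%:R).
  apply/matrixP => i j; rewrite !mxE /= /bump.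
  have hj : (j < b + n)%N := ltn_ord j.
  rewrite [((b + n) <= j)%N]leqNgt (ltn_ord j) add0n.
  case: ifP => // /negbT; rewrite -leqNgt => hjn.
  case: leqP => hbi //=; rewrite add1n.

  move: hj hjn hbi; move: (nat_of_ord i) (nat_of_ord j) => x y h1 h2 h3.
  have -> : (x.+1 == (y - n)%N) = false by apply/negbTE/eqP; lia.
  have -> : (x == (y - n)%N) = false by apply/negbTE/eqP; lia.
  done.
rewrite (IH (b + n)%N (fun i j => f (bump b i) j)) //.
have -> : \matrix_(i < n, j < n) f (bump b (i + b)) j = \matrix_(i < n, j < n) f (i + b.+1)%N j.
  by apply/matrixP => i j; rewrite !mxE /bump leq_addl add1n addnS.
rewrite mulrA -exprD; congr (_ * _).
rewrite -signr_odd; rewrite -[in RHS]signr_odd /=; congr (_ ^+ _).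
rewrite mulnS !oddD; case: (odd b); case: (odd n); case: (odd (n * b)) => //.
Qed.

Lemma key (K n b : nat) (l m : nat -> nat -> F) : K = (n + b)%N ->
  (forall i j, (j < n)%N -> (n <= i)%N -> (i < K)%N ->
     \sum_(k < K) l i k * m k j = 0) ->
  \det (\matrix_(i < b, j < b) l (n + i)%N j) *
  \det (\matrix_(i < n, j < n) \sum_(k < K) l i k * m k j)
  = (-1) ^+ (n * b) * \det (\matrix_(i < K, j < K) l i j) *
    \det (\matrix_(i < n, j < n) m (i + b)%N j).
Proof.
move=> hK hz; subst K.
set LK := \matrix_(i < n + b, j < n + b) l i j.
set G := \matrix_(i < n + b, j < n + b)
  (if (j < n)%N then m i j else ((i : nat) == (j - n)%N)%:R).
have hG : \det G = (-1) ^+ (n * b) * \det (\matrix_(i < n, j < n) m (i + b)%N j).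
  by apply: sign_det; rewrite addnC.
have hP : LK *m G = block_mx (\matrix_(i < n, j < n) \sum_(k < n + b) l i k * m k j)
     (\matrix_(i < n, j < b) l i j) 0 (\matrix_(i < b, j < b) l (n + i)%N j).
  apply/matrixP => i j; rewrite !mxE.
  under eq_bigr => k _ do rewrite !mxE.
  case: (splitP i) => i' hi; rewrite !mxE; case: (splitP j) => j' hj; rewrite !mxE hj.
  - by rewrite hi.
  - by rewrite addKn sum_delta ?hi // (leq_trans (ltn_ord j')) ?leq_addl.
  - by apply: hz => //; rewrite hi ?leq_addr // ltn_add2l.
  - by rewrite addKn sum_delta ?hi // (leq_trans (ltn_ord j')) ?leq_addl.
have := det_mulmx LK G; rewrite hP det_ublock hG => h.
by rewrite mulrC h; ring.
Qed.

Lemma sum_trunc (K N : nat) (g : nat -> F) : (K <= N)%N ->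
  (forall k, (K <= k)%N -> (k < N)%N -> g k = 0) ->
  \sum_(k < N) g k = \sum_(k < K) g k.
Proof.
move=> hKN hz; rewrite -!(big_mkord xpredT) (@big_cat_nat _ _ _ K 0 N) //=.
rewrite [X in _ + X]big1_seq ?addr0 // => k /andP[_]; rewrite mem_index_iota => /andP[h1 h2].
exact: hz.
Qed.

Lemma ent_ord (T : zmodType) m n (A : 'M[T]_(m, n)) (i : 'I_m) (j : 'I_n) : ent A i j = A i j.
Proof. by rewrite /ent !valK. Qed.

Lemma ent_out (T : zmodType) m n (A : 'M[T]_(m, n)) i j : (m <= i)%N || (n <= j)%N -> ent A i j = 0.
Proof.
rewrite /ent; case/orP => h.
  by rewrite insubF // ltnNge h.
by case: insub => // ?; rewrite insubF // ltnNge h.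
Qed.

Lemma ent_mul m n r (A : 'M[F]_(m, n)) (B : 'M[F]_(n, r)) i j : (i < m)%N -> (j < r)%N ->
  ent (A *m B) i j = \sum_(k < n) ent A i k * ent B k j.
Proof.
move=> hi hj; rewrite -[i]/(nat_of_ord (Ordinal hi)) -[j]/(nat_of_ord (Ordinal hj)).
rewrite ent_ord mxE; apply: eq_bigr => k _; by rewrite !ent_ord.
Qed.

Lemma ent_tr m n (A : 'M[F]_(m, n)) i j : ent A^T i j = ent A j i.
Proof.
case: (ltnP i n) => hi; last by rewrite !ent_out // hi ?orbT.
case: (ltnP j m) => hj; last by rewrite !ent_out // hj ?orbT.
rewrite -[i]/(nat_of_ord (Ordinal hi)) -[j]/(nat_of_ord (Ordinal hj)).
by rewrite !ent_ord mxE.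
Qed.

Lemma det_lowf k (h : nat -> nat -> F) : (forall i j, (i < j)%N -> h i j = 0) ->
  \det (\matrix_(i < k, j < k) h i j) = \prod_(i < k) h i i.
Proof.
move=> hl; rewrite det_trig; first by apply: eq_bigr => i _; rewrite mxE.
by apply/is_trig_mxP => i j hij; rewrite mxE hl.
Qed.

Lemma det_upf k (h : nat -> nat -> F) : (forall i j, (j < i)%N -> h i j = 0) ->
  \det (\matrix_(i < k, j < k) h i j) = \prod_(i < k) h i i.
Proof.
move=> hl; rewrite -det_tr det_trig; first by apply: eq_bigr => i _; rewrite !mxE.
by apply/is_trig_mxP => i j hij; rewrite !mxE hl.
Qed.

Lemma lead_mulL N (L M : 'M[F]_N) k : (k <= N)%N ->
  (forall i j, (i < j)%N -> ent L i j = 0) ->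
  \matrix_(i < k, j < k) ent (L *m M) i j =
  (\matrix_(i < k, j < k) ent L i j) *m (\matrix_(i < k, j < k) ent M i j).
Proof.
move=> hk hl; apply/matrixP => i j; rewrite !mxE.
rewrite ent_mul ?(leq_trans (ltn_ord _) hk) //.
rewrite (@sum_trunc k N (fun t => ent L i t * ent M t j) hk).
  by apply: eq_bigr => t _; rewrite !mxE.
by move=> t ht _; rewrite hl ?mul0r // (leq_trans (ltn_ord i)).
Qed.

Lemma lead_mulU N (M U : 'M[F]_N) k : (k <= N)%N ->
  (forall i j, (j < i)%N -> ent U i j = 0) ->
  \matrix_(i < k, j < k) ent (M *m U) i j =
  (\matrix_(i < k, j < k) ent M i j) *m (\matrix_(i < k, j < k) ent U i j).
Proof.
move=> hk hl; apply/matrixP => i j; rewrite !mxE.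
rewrite ent_mul ?(leq_trans (ltn_ord _) hk) //.
rewrite (@sum_trunc k N (fun t => ent M i t * ent U t j) hk).
  by apply: eq_bigr => t _; rewrite !mxE.
by move=> t ht _; rewrite hl ?mulr0 // (leq_trans (ltn_ord j)).
Qed.

Lemma inv_upper N (U : 'M[F]_N) : (forall i j : 'I_N, (j < i)%N -> U i j = 0) ->
  U \in unitmx ->
  (forall i j : 'I_N, (j < i)%N -> invmx U i j = 0) /\
  (forall i : 'I_N, invmx U i i * U i i = 1).
Proof.
move=> hu hU.
have hVU := mulVmx hU.
have hd : forall i, U i i != 0.
  move: hU; rewrite unitmxE unitfE -det_tr det_trig; last first.
    by apply/is_trig_mxP => i j hij; rewrite mxE hu.
  move=> /prodf_neq0 h i; have := h i isT; by rewrite mxE.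
have hent : forall i j : 'I_N, \sum_(k < N) invmx U i k * U k j = ((i == j)%:R).
  by move=> i j; move/matrixP: hVU => /(_ i j); rewrite !mxE.
have low : forall i j : 'I_N, (j < i)%N -> invmx U i j = 0.
  move=> i; suff: forall t (j : 'I_N), (j < t)%N -> (j < i)%N -> invmx U i j = 0.
    by move=> h j; apply: (h j.+1).
  elim=> [//|t IH] j hjt hji.
  have := hent i j; rewrite (bigD1 j) //= big1.
    rewrite addr0; have -> : (i == j) = false by apply/negbTE; rewrite neq_ltn hji orbT.
    by move/eqP; rewrite mulf_eq0 (negbTE (hd j)) orbF => /eqP.
  move=> k hkj; case: (ltngtP k j) => hk.
  - by rewrite IH ?mul0r // (leq_trans hk) // (leq_trans _ hji).
  - by rewrite hu ?mulr0.
  - by move: hkj; rewrite (val_inj hk) eqxx.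
split => // i; have := hent i i; rewrite (bigD1 i) //= big1 ?addr0 ?eqxx //.
move=> k hki; case: (ltngtP k i) => hk.
- by rewrite low ?mul0r.
- by rewrite hu ?mulr0.
- by move: hki; rewrite (val_inj hk) eqxx.
Qed.

Lemma sum_delta_ent N (A : 'M[F]_N) i c :
  \sum_(k < N) ent A i k * ((k : nat) == c)%:R = ent A i c.
Proof.
case: (ltnP c N) => hc; first by rewrite (sum_delta (ent A i)).
rewrite big1 ?(ent_out A) ?hc ?orbT // => k _.
have -> : ((k : nat) == c) = false by apply/negbTE; rewrite neq_ltn (leq_trans (ltn_ord k) hc).
by rewrite mulr0.
Qed.

Lemma low_ent N (A : 'M[F]_N) : (forall i j : 'I_N, (i < j)%N -> A i j = 0) ->
  forall i j : nat, (i < j)%N -> ent A i j = 0.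
Proof.
move=> h i j hij; case: (ltnP j N) => hj; last by rewrite ent_out // hj orbT.
have hi : (i < N)%N by apply: ltn_trans hj.
by rewrite -[i]/(nat_of_ord (Ordinal hi)) -[j]/(nat_of_ord (Ordinal hj)) ent_ord h.
Qed.

Lemma up_ent N (A : 'M[F]_N) : (forall i j : 'I_N, (j < i)%N -> A i j = 0) ->
  forall i j : nat, (j < i)%N -> ent A i j = 0.
Proof.
move=> h i j hij; case: (ltnP i N) => hi; last by rewrite ent_out // hi.
have hj : (j < N)%N by apply: ltn_trans hi.
by rewrite -[i]/(nat_of_ord (Ordinal hi)) -[j]/(nat_of_ord (Ordinal hj)) ent_ord h.
Qed.

Lemma sum_single N (g : nat -> F) n : (n < N)%N ->
  (forall k, (k < N)%N -> k != n -> g k = 0) -> \sum_(k < N) g k = g n.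
Proof.
move=> hn hz; rewrite (bigD1 (Ordinal hn)) //= big1 ?addr0 // => k hk.
apply: hz => //; apply: contra hk => /eqP h; apply/eqP/val_inj.
Qed.

Lemma mul_diag N (A B : 'M[F]_N) i : (i < N)%N ->
  (forall i j, (j < i)%N -> ent A i j = 0) -> (forall i j, (j < i)%N -> ent B i j = 0) ->
  ent (A *m B) i i = ent A i i * ent B i i.
Proof.
move=> hi ha hb; rewrite ent_mul // (@sum_single N (fun k => ent A i k * ent B k i) i hi) //.
move=> k hk hki; case: (ltngtP k i) => h.
- by rewrite ha ?mul0r.
- by rewrite hb ?mulr0.
- by move: hki; rewrite h eqxx.
Qed.

Lemma tau_gen N (L M : 'M[F]_N) k b : (k + b <= N)%N ->
  (forall i j, (i < j)%N -> ent L i j = 0) ->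
  (forall i j, (j < i)%N -> ent (L *m M) i j = 0) ->
  \det (\matrix_(i < b, j < b) ent L (k + i)%N j) *
  \det (\matrix_(i < k, j < k) ent (L *m M) i j) =
  (-1) ^+ (k * b) * \det (\matrix_(i < k + b, j < k + b) ent L i j) *
  \det (\matrix_(i < k, j < k) ent M (i + b)%N j).
Proof.
move=> hN hl hu.
have hs : forall i j, (i < k + b)%N -> (j < N)%N ->
    \sum_(t < k + b) ent L i t * ent M t j = ent (L *m M) i j.
  move=> i j hi hj; rewrite ent_mul ?(leq_trans hi) //.
  rewrite (@sum_trunc (k + b) N (fun t => ent L i t * ent M t j)) //.
  by move=> t ht _; rewrite hl ?mul0r // (leq_trans hi).
have -> : \matrix_(i < k, j < k) ent (L *m M) i j =
          \matrix_(i < k, j < k) \sum_(t < k + b) ent L i t * ent M t j.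
  apply/matrixP => i j; rewrite !mxE hs //.
    by rewrite (leq_trans (ltn_ord i)) // leq_addr.
  by rewrite (leq_trans (ltn_ord j)) // (leq_trans _ hN) // leq_addr.
apply: key => // i j hj hi hik.
rewrite hs //; first by rewrite hu // (leq_trans hj).
move: hN; lia.
Qed.
End Gen.

Section Spec.
Variable R : realType.

Definition xmf (r i c : nat) : {poly R} := if (i %% r == c)%N then 'X^(i %/ r) else 0.

Lemma Xmon_E r N (i : 'I_N) (c : 'I_r) : Xmon R r N i c = xmf r i c.
Proof. by rewrite mxE. Qed.

Lemma Xfrak_step r m (c : 'I_r) :
  \sum_(k < r) xmf r m k * Xfrak R r k c = xmf r m.+1 c.
Proof.
have hr : (0 < r)%N by apply: leq_ltn_trans (ltn_ord c).
have hm : (m %% r < r)%N by rewrite ltn_mod.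
rewrite (bigD1 (Ordinal hm)) //= big1 ?addr0; last first.
  move=> k hk; rewrite /xmf.
  suff -> : (m %% r == k)%N = false by rewrite mul0r.
  by apply/negbTE; apply: contra hk => /eqP h; apply/eqP/val_inj.
rewrite /xmf eqxx mxE /=.
have hdm := divn_eq m r.
case: (ltnP (m %% r).+1 r) => hlt.
  have e1 : (m.+1 %% r = (m %% r).+1)%N.
    have -> : m.+1 = (m %/ r * r + (m %% r).+1)%N by rewrite {1}hdm addnS.
    by rewrite modnMDl modn_small.
  have e2 : (m.+1 %/ r = m %/ r)%N.
    have -> : m.+1 = (m %/ r * r + (m %% r).+1)%N by rewrite {1}hdm addnS.
    by rewrite divnMDl // (divn_small hlt) addn0.
  rewrite e1 e2.
  have -> : (m %% r == r.-1)%N = false by apply/negbTE/eqP; lia.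
  by rewrite /= addr0; case: eqP => _; rewrite ?mulr1 ?mulr0.
have hq : (m %% r = r.-1)%N by lia.
have e1 : (m.+1 %% r = 0)%N.
  have -> : m.+1 = ((m %/ r).+1 * r)%N by rewrite {1}hdm hq -addnS prednK // mulSn addnC.
  by rewrite modnMl.
have e2 : (m.+1 %/ r = (m %/ r).+1)%N.
  have -> : m.+1 = ((m %/ r).+1 * r)%N by rewrite {1}hdm hq -addnS prednK // mulSn addnC.
  by rewrite mulnK.
rewrite e1 e2 hq eqxx /=.
have -> : (r.-1.+1 == c :> nat) = false by apply/negbTE/eqP; rewrite prednK //; move: (ltn_ord c); lia.
rewrite add0r [in RHS]eq_sym; case: eqP => _.
  by rewrite exprSr.
by rewrite mulr0.
Qed.

Lemma Xmon_shift r N n (i : 'I_N) (c : 'I_r) : (i + n < N)%N ->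
  (Xmon R r N *m Xfrak R r ^+ n) i c = xmf r (i + n) c.
Proof.
elim: n c => [|n IH] c h.
  by rewrite expr0 mulmx1 addn0 Xmon_E.
rewrite exprSr -mulmxE mulmxA mxE.
rewrite (eq_bigr (fun k : 'I_r => xmf r (i + n) k * Xfrak R r k c)).
  by rewrite Xfrak_step addnS.
by move=> k _; rewrite IH //; lia.
Qed.


Lemma xmf0 r l c : (c < r)%N -> (xmf r l c).[0] = ((l == c)%:R).
Proof.
move=> hc; rewrite /xmf; case: (ltnP l r) => hl.
  rewrite modn_small // divn_small //; case: eqP => _; by rewrite ?hornerC ?hornerXn ?expr0.
have hlc : (l == c) = false by apply/negbTE; rewrite neq_ltn (leq_trans hc hl) orbT.
rewrite hlc; case: ifP => _; rewrite ?hornerC // hornerXn expr0n.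
have -> : (l %/ r == 0)%N = false by apply/negbTE; rewrite -lt0n divn_gt0 ?(leq_ltn_trans _ hc).
by [].
Qed.

Lemma Bmat0 q N (L : 'M[R]_N) i c : (i < N)%N -> (c < q)%N ->
  (ent (Bmat q L) i c).[0] = ent L i c.
Proof.
move=> hi hc; rewrite -[i]/(nat_of_ord (Ordinal hi)) -[c]/(nat_of_ord (Ordinal hc)) ent_ord.
rewrite mxE horner_sum -[RHS](sum_delta_ent L) /=; apply: eq_bigr => l _.
by rewrite !mxE hornerCM xmf0 // -(ent_ord L).
Qed.

Lemma Amat0 p N (U : 'M[R]_N) r m : (r < p)%N -> (m < N)%N ->
  (ent (Amat p U) r m).[0] = ent U r m.
Proof.
move=> hr hm; rewrite -[r]/(nat_of_ord (Ordinal hr)) -[m]/(nat_of_ord (Ordinal hm)) ent_ord.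
rewrite mxE horner_sum /=.
rewrite -(ent_tr U) -(sum_delta_ent U^T m r).
apply: eq_bigr => l _.
by rewrite !mxE mulrC hornerCM xmf0 // ent_tr -(ent_ord U).
Qed.

Lemma tauB_E q N (L : 'M[R]_N) b k : (b <= q)%N -> (k + b <= N)%N ->
  tauB q L b k = \det (\matrix_(i < b, j < b) ent L (k + i)%N j).
Proof.
move=> hb hk; rewrite /tauB; congr (\det _); apply/matrixP => i j; rewrite !mxE Bmat0 //.
  by rewrite (leq_trans _ hk) // ltn_add2l.
by rewrite (leq_trans (ltn_ord j)).
Qed.

Lemma tauA_E p N (U : 'M[R]_N) a k : (a <= p)%N -> (k + a <= N)%N ->
  tauA p U a k = \det (\matrix_(i < a, j < a) ent U i (k + (a - 1 - j))%N).
Proof.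
move=> ha hk; rewrite /tauA; congr (\det _); apply/matrixP => i j; rewrite !mxE Amat0 //.
  by rewrite (leq_trans (ltn_ord i)).
move: (ltn_ord j) hk; lia.
Qed.

Lemma momM_shiftB q p (mup mun : 'I_q -> 'I_p -> {measure set R -> \bar R}) n N i j :
  (i + n < N)%N ->
  ent (momM mup mun n 0 N) i j = ent (momM mup mun 0 0 N) (i + n)%N j.
Proof.
move=> h; case: (ltnP j N) => hj; last by rewrite !ent_out // hj orbT.
have hi : (i < N)%N by apply: leq_ltn_trans h; apply: leq_addr.
rewrite -[i]/(nat_of_ord (Ordinal hi)) -[j]/(nat_of_ord (Ordinal hj)).
rewrite -[(Ordinal hi + n)%N]/(nat_of_ord (Ordinal h)) !ent_ord !mxE /=.
apply: eq_bigr => c _; apply: eq_bigr => d _; congr (sint _ _ (_ * _)).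
by rewrite !Xmon_shift //= addn0.
Qed.

Lemma momM_shiftA q p (mup mun : 'I_q -> 'I_p -> {measure set R -> \bar R}) m N i j :
  (j + m < N)%N ->
  ent (momM mup mun 0 m N) i j = ent (momM mup mun 0 0 N) i (j + m)%N.
Proof.
move=> h; case: (ltnP i N) => hi; last by rewrite !ent_out // hi.
have hj : (j < N)%N by apply: leq_ltn_trans h; apply: leq_addr.
rewrite -[i]/(nat_of_ord (Ordinal hi)) -[j]/(nat_of_ord (Ordinal hj)).
rewrite -[(Ordinal hj + m)%N]/(nat_of_ord (Ordinal h)) !ent_ord !mxE /=.
apply: eq_bigr => c _; apply: eq_bigr => d _; congr (sint _ _ (_ * _)).
by rewrite !Xmon_shift //= addn0.
Qed.

Section GB.
Variables (N : nat) (M L U : 'M[R]_N).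
Hypothesis hgb : GaussBorel M L U.

Lemma GB_lowL : forall i j, (i < j)%N -> ent L i j = 0.
Proof. by case: hgb => hl _ _ _ _; apply: low_ent. Qed.

Lemma GB_upU : forall i j, (j < i)%N -> ent U i j = 0.
Proof. by case: hgb => _ _ hu _ _; apply: up_ent. Qed.

Lemma GB_diagL i : (i < N)%N -> ent L i i = 1.
Proof.
case: hgb => _ hd _ _ _ hi.
by rewrite -[i]/(nat_of_ord (Ordinal hi)) ent_ord hd.
Qed.

Lemma GB_Lunit : L \in unitmx.
Proof.
case: hgb => hl hd _ _ _; rewrite unitmxE det_trig; last by apply/is_trig_mxP.
by rewrite big1 ?unitr1 // => i _; rewrite hd.
Qed.

Lemma GB_Uunit : U \in unitmx.
Proof. by case: hgb. Qed.

Lemma GB_LM : L *m M = invmx U.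
Proof.
case: hgb => _ _ _ _ ->; by rewrite mulmxA mulmxV ?GB_Lunit // mul1mx.
Qed.

Lemma GB_MU : M *m U = invmx L.
Proof.
case: hgb => _ _ _ hU ->; by rewrite -mulmxA mulVmx // mulmx1.
Qed.

Lemma GB_upH : forall i j, (j < i)%N -> ent (invmx U) i j = 0.
Proof.
case: hgb => _ _ hu hU _; apply: up_ent; by case: (inv_upper hu hU).
Qed.

Lemma GB_HU i : (i < N)%N -> ent (invmx U) i i * ent U i i = 1.
Proof.
case: hgb => _ _ hu hU _ hi; case: (inv_upper hu hU) => _ h.
by rewrite -[i]/(nat_of_ord (Ordinal hi)) !ent_ord h.
Qed.

Lemma GB_Hnz i : (i < N)%N -> ent (invmx U) i i != 0.
Proof. by move=> hi; apply/eqP => h; have := GB_HU hi; rewrite h mul0r => /eqP; rewrite eq_sym oner_eq0. Qed.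

Lemma GB_lowLi : forall i j, (i < j)%N -> ent (invmx L) i j = 0.
Proof.
case: hgb => hl _ _ _ _.
have hup : forall i j : 'I_N, (j < i)%N -> L^T i j = 0 by move=> i j h; rewrite mxE hl.
have hun : L^T \in unitmx by rewrite unitmx_tr GB_Lunit.
case: (inv_upper hup hun) => h _.
apply: low_ent => i j hij; have := congr1 (fun A : 'M[R]_N => A j i) (trmx_inv L); rewrite mxE => ->; exact: h.
Qed.

Lemma GB_lead k : (k <= N)%N ->
  \det (\matrix_(i < k, j < k) ent M i j) = \prod_(i < k) ent (invmx U) i i.
Proof.
move=> hk; rewrite -(det_upf k (h := fun i j => ent (invmx U) i j)); last exact: GB_upH.
rewrite -GB_LM lead_mulL //; last exact: GB_lowL.
rewrite det_mulmx (det_lowf k (h := fun i j => ent L i j)); last exact: GB_lowL.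
rewrite big1 ?mul1r // => i _; apply: GB_diagL; exact: leq_trans (ltn_ord i) hk.
Qed.

Lemma GB_Dnz k : (k <= N)%N -> \det (\matrix_(i < k, j < k) ent M i j) != 0.
Proof.
move=> hk; rewrite GB_lead //; apply/prodf_neq0 => i _; apply: GB_Hnz.
exact: leq_trans (ltn_ord i) hk.
Qed.

Lemma GB_piv k : (k < N)%N ->
  ent (invmx U) k k = \det (\matrix_(i < k.+1, j < k.+1) ent M i j) /
                      \det (\matrix_(i < k, j < k) ent M i j).
Proof.
move=> hk; rewrite !GB_lead ?(ltnW hk) // big_ord_recr /= mulrAC mulfV ?mul1r //.
by apply/prodf_neq0 => i _; apply: GB_Hnz; exact: ltn_trans (ltn_ord i) hk.
Qed.
End GB.
End Spec.

Lemma sgn_odd (R : realType) k : (-1) ^+ k = (if odd k then -1 else 1 : R).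
Proof. by rewrite -signr_odd; case: (odd k). Qed.

Unset Implicit Arguments. Set Strict Implicit.

Theorem mainTheorem1 (R : realType) (q p N : nat) (hq : (0 < q)%N) (hp : (0 < p)%N)
  (mup mun : 'I_q -> 'I_p -> {measure set R -> \bar R})
  (hint : forall (c : 'I_q) (d : 'I_p) (k : nat),
      (mup c d).-integrable setT (fun x : R => (x ^+ k)%:E) /\
      (mun c d).-integrable setT (fun x : R => (x ^+ k)%:E))
  (LL UU : nat -> nat -> 'M[R]_N)
  (hfac : forall n m : nat, ((n <= q)%N /\ m = 0%N) \/ (n = 0%N /\ (m <= p)%N) ->
      GaussBorel (momM mup mun n m N) (LL n m) (UU n m)) :
  (forall b n : nat, (1 <= b <= q)%N -> (n + b < N)%N ->
     ent (Ufactor UU b) n n =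
     - (tauB q (LL 0%N 0%N) b.-1 n * tauB q (LL 0%N 0%N) b n.+1)
       / (tauB q (LL 0%N 0%N) b.-1 n.+1 * tauB q (LL 0%N 0%N) b n))
  /\
  (forall a n : nat, (1 <= a <= p)%N -> (n + a < N)%N ->
     ent (Lfactor LL a) n.+1 n =
     - (tauA p (UU 0%N 0%N) a.-1 n.+2 * tauA p (UU 0%N 0%N) a n)
       / (tauA p (UU 0%N 0%N) a.-1 n.+1 * tauA p (UU 0%N 0%N) a n.+1)).
Proof.
set M0 := momM mup mun 0 0 N.
set L0 := LL 0%N 0%N. set U0 := UU 0%N 0%N.
have gb0 : GaussBorel M0 L0 U0 by apply: hfac; left.
have hU0nz : forall i, (i < N)%N -> ent U0 i i != 0.
  move=> i hi; apply/eqP => h; have := GB_HU gb0 hi; rewrite h mulr0 => /eqP.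
  by rewrite eq_sym oner_eq0.
have hM0 : forall k, \det (\matrix_(i < k, j < k) ent M0 (i + 0)%N j) =
                     \det (\matrix_(i < k, j < k) ent M0 i j).
  by move=> k; congr (\det _); apply/matrixP => i j; rewrite !mxE addn0.
split.
- move=> b n /andP[hb1 hbq] hnb.
  case: b hb1 hbq hnb => [//|c] _ hcq hn /=.
  have gbB : forall b', (b' <= q)%N -> GaussBorel (momM mup mun b' 0 N) (LL b' 0%N) (UU b' 0%N).
    by move=> b' hb'; apply: hfac; left.
  pose Db b' t := \det (\matrix_(i < t, j < t) ent M0 (i + b')%N j).
  have hDb : forall b' t, (b' <= q)%N -> (t + b' <= N)%N ->
       \det (\matrix_(i < t, j < t) ent (momM mup mun b' 0 N) i j) = Db b' t.
    move=> b' t hb' ht; congr (\det _); apply/matrixP => i j; rewrite !mxE momM_shiftB //.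
    by move: (ltn_ord i) ht; lia.
  have hpiv : forall b' k, (b' <= q)%N -> (k + b' < N)%N ->
      ent (invmx (UU b' 0%N)) k k = Db b' k.+1 / Db b' k.
    move=> b' k hb' hk; rewrite (GB_piv (gbB b' hb')); last by move: hk; lia.
    by rewrite !hDb //; move: hk; lia.
  have hDnz : forall b' t, (b' <= q)%N -> (t + b' <= N)%N -> Db b' t != 0.
    move=> b' t hb' ht; rewrite -hDb //; apply: (GB_Dnz (gbB b' hb')); move: ht; lia.
  have htau : forall b' k, (b' <= q)%N -> (k + b' <= N)%N ->
      tauB q L0 b' k = (-1) ^+ (k * b') * Db b' k / Db 0%N k.
    move=> b' k hb' hk; rewrite tauB_E //.
    have := tau_gen (M := M0) hk (GB_lowL gb0).
    rewrite (GB_LM gb0) => /(_ (GB_upH gb0)).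
    rewrite (det_upf k (h := fun i j => ent (invmx U0) i j)); last exact: GB_upH gb0.
    rewrite -(GB_lead gb0) ?(leq_trans _ hk) ?leq_addr //.
    rewrite (det_lowf (k + b') (h := fun i j => ent L0 i j)); last exact: GB_lowL gb0.
    rewrite big1 ?mulr1; last by move=> i _; apply: (GB_diagL gb0); apply: leq_trans (ltn_ord i) hk.
    rewrite /Db hM0 => <-; rewrite mulfK //.
    by apply: (GB_Dnz gb0); move: hk; lia.
  rewrite /Ufactor /= mul_diag; first last.
  - exact: GB_upU (gbB c (ltnW hcq)).
  - have := GB_upH (gbB c.+1 hcq); exact.
  - by move: hn; lia.
  have hUc : ent (UU c 0%N) n n = (ent (invmx (UU c 0%N)) n n)^-1.
    have hnN : (n < N)%N by move: hn; lia.
    have h := GB_HU (gbB c (ltnW hcq)) hnN.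
    have hH := GB_Hnz (gbB c (ltnW hcq)) hnN.
    by rewrite -[LHS](mulKf hH) h mulr1.
  rewrite hUc !hpiv //; try (by move: hn; lia); try exact: ltnW.
  rewrite !htau //; try (by move: hn; lia); try exact: ltnW.
  have n1 := hDnz c n (ltnW hcq) ltac:(by move: hn; lia).
  have n2 := hDnz c n.+1 (ltnW hcq) ltac:(by move: hn; lia).
  have n3 := hDnz c.+1 n hcq ltac:(by move: hn; lia).
  have n4 := hDnz c.+1 n.+1 hcq ltac:(by move: hn; lia).
  have n5 := hDnz 0%N n (leq0n _) ltac:(by move: hn; lia).
  have n6 := hDnz 0%N n.+1 (leq0n _) ltac:(by move: hn; lia).
  rewrite !sgn_odd !oddM !oddS /=.
  by case: (odd n); case: (odd c) => /=; field; rewrite ?n1 ?n2 ?n3 ?n4 ?n5 ?n6.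
- move=> a n /andP[ha1 hap] hna.
  case: a ha1 hap hna => [//|c] _ hcp hn /=.
  have hnN : (n.+1 < N)%N by move: hn; lia.
  have gbA : forall a', (a' <= p)%N -> GaussBorel (momM mup mun 0 a' N) (LL 0%N a') (UU 0%N a').
    by move=> a' ha'; apply: hfac; right.
  pose Ea a' t := \det (\matrix_(i < t, j < t) ent M0 i (j + a')%N).
  have hEa : forall a' t, (a' <= p)%N -> (t + a' <= N)%N ->
       \det (\matrix_(i < t, j < t) ent (momM mup mun 0 a' N) i j) = Ea a' t.
    move=> a' t ha' ht; congr (\det _); apply/matrixP => i j; rewrite !mxE momM_shiftA //.
    by move: (ltn_ord j) ht; lia.
  have hpiv : forall a' k, (a' <= p)%N -> (k + a' < N)%N ->
      ent (invmx (UU 0%N a')) k k = Ea a' k.+1 / Ea a' k.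
    move=> a' k ha' hk; rewrite (GB_piv (gbA a' ha')); last by move: hk; lia.
    by rewrite !hEa //; move: hk; lia.
  have hEnz : forall a' t, (a' <= p)%N -> (t + a' <= N)%N -> Ea a' t != 0.
    move=> a' t ha' ht; rewrite -hEa //; apply: (GB_Dnz (gbA a' ha')); move: ht; lia.
  pose P t := \prod_(i < t) ent U0 i i.
  have hPnz : forall t, (t <= N)%N -> P t != 0.
    move=> t ht; apply/prodf_neq0 => i _; apply: hU0nz; exact: leq_trans (ltn_ord i) ht.
  pose Prev a' := \matrix_(i < a', j < a') ((i : nat) == (a' - 1 - j)%N)%:R : 'M[R]_a'.
  have hPrev : forall a', \det (Prev a') != 0.
    move=> a'; have : Prev a' *m Prev a' = 1%:M.
      apply/matrixP => i j; rewrite !mxE.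
      rewrite (eq_bigr (fun t : 'I_a' => ((i : nat) == (a' - 1 - t)%N)%:R * ((t : nat) == (a' - 1 - j)%N)%:R)); last by move=> t _; rewrite !mxE.
      rewrite (@sum_delta R a' (fun t => ((i : nat) == (a' - 1 - t)%N)%:R) (a' - 1 - j)%N); last by move: (ltn_ord j); lia.
      have -> : (a' - 1 - (a' - 1 - j))%N = j by move: (ltn_ord j); lia.
      by [].
    move/(congr1 determinant); rewrite det_mulmx det1 => h; apply/eqP => h0.
    by move: h; rewrite h0 mul0r => /eqP; rewrite eq_sym oner_eq0.
  have htau : forall a' k, (a' <= p)%N -> (k + a' <= N)%N ->
      tauA p U0 a' k = \det (Prev a') * ((-1) ^+ (k * a') * P (k + a')%N * Ea a' k).
    move=> a' k ha' hk; rewrite tauA_E //.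
    have -> : \matrix_(i < a', j < a') ent U0 i (k + (a' - 1 - j))%N =
        (\matrix_(i < a', j < a') ent U0 i (k + j)%N) *m Prev a'.
      apply/matrixP => i j; rewrite !mxE.
      rewrite (eq_bigr (fun t : 'I_a' => ent U0 i (k + t)%N * ((t : nat) == (a' - 1 - j)%N)%:R)); last by move=> t _; rewrite !mxE.
      by rewrite (@sum_delta R a' (fun t => ent U0 i (k + t)%N)) //; move: (ltn_ord j); lia.
    rewrite det_mulmx mulrC; congr (_ * _).
    have -> : \det (\matrix_(i < a', j < a') ent U0 i (k + j)%N) =
              \det (\matrix_(i < a', j < a') ent U0^T (k + i)%N j).
      by rewrite -det_tr; congr (\det _); apply/matrixP => i j; rewrite !mxE ent_tr.
    have hlow : forall i j, (i < j)%N -> ent U0^T i j = 0.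
      by move=> i j hij; rewrite ent_tr (GB_upU gb0).
    have hup : forall i j, (j < i)%N -> ent (U0^T *m M0^T) i j = 0.
      by move=> i j hij; rewrite -trmx_mul ent_tr (GB_MU gb0) (GB_lowLi gb0).
    have := tau_gen (M := M0^T) hk hlow hup.
    have -> : \det (\matrix_(i < k, j < k) ent (U0^T *m M0^T) i j) = 1.
      have -> : \det (\matrix_(i < k, j < k) ent (U0^T *m M0^T) i j) =
                \det (\matrix_(i < k, j < k) ent (M0 *m U0) i j).
        by rewrite -det_tr; congr (\det _); apply/matrixP => i j; rewrite !mxE -trmx_mul ent_tr.
      rewrite lead_mulU ?(leq_trans _ hk) ?leq_addr //; last exact: GB_upU gb0.
      rewrite det_mulmx (GB_lead gb0) ?(leq_trans _ hk) ?leq_addr //.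
      rewrite (det_upf k (h := fun i j => ent U0 i j)); last exact: GB_upU gb0.
      rewrite -big_split /=; apply: big1 => i _; apply: (GB_HU gb0).
      by move: (ltn_ord i) hk; lia.
    rewrite mulr1 => ->.
    rewrite (det_lowf (k + a') (h := fun i j => ent U0^T i j)) //.
    have -> : \det (\matrix_(i < k, j < k) ent M0^T (i + a')%N j) = Ea a' k.
      by rewrite /Ea -det_tr; congr (\det _); apply/matrixP => i j; rewrite !mxE ent_tr.
    by congr (_ * _ * _); apply: eq_bigr => i _; rewrite ent_tr.
  rewrite /Lfactor /= -(GB_MU (gbA c.+1 hcp)) mulmxA ent_mul //; last exact: ltnW.
  have hLM : forall k, (k <= n)%N ->
      ent (LL 0%N c *m momM mup mun 0 c.+1 N) n.+1 k = ent (invmx (UU 0%N c)) n.+1 k.+1.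
    move=> k hk; rewrite -(GB_LM (gbA c (ltnW hcp))) !ent_mul //; last by move: hk hn; lia.
      apply: eq_bigr => l _; rewrite momM_shiftA; last by move: hk hn; lia.
      rewrite [in RHS]momM_shiftA; first by rewrite addSnnS.
      by move: hk hn; lia.
    by move: hk hn; lia.
  rewrite (@sum_single _ N (fun k => ent (LL 0%N c *m momM mup mun 0 c.+1 N) n.+1 k *
                                     ent (UU 0%N c.+1) k n) n); last first.
  - move=> k hk hkn; case: (ltngtP k n) => h.
    + by rewrite hLM ?(ltnW h) // (GB_upH (gbA c (ltnW hcp))) ?mul0r.
    + by rewrite (GB_upU (gbA c.+1 hcp)) ?mulr0.
    + by move: hkn; rewrite h eqxx.
  - exact: ltnW.
  rewrite hLM //.
  have hnN' : (n < N)%N by exact: ltnW.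
  have hUc : ent (UU 0%N c.+1) n n = (ent (invmx (UU 0%N c.+1)) n n)^-1.
    have h := GB_HU (gbA c.+1 hcp) hnN'.
    have hH := GB_Hnz (gbA c.+1 hcp) hnN'.
    by rewrite -[LHS](mulKf hH) h mulr1.
  rewrite hUc !hpiv //; try (by move: hn; lia); try exact: ltnW.
  rewrite !htau //; try (by move: hn; lia); try exact: ltnW.
  have n1 := hEnz c n.+2 (ltnW hcp) ltac:(by move: hn; lia).
  have n2 := hEnz c n.+1 (ltnW hcp) ltac:(by move: hn; lia).
  have n3 := hEnz c.+1 n hcp ltac:(by move: hn; lia).
  have n4 := hEnz c.+1 n.+1 hcp ltac:(by move: hn; lia).
  have n5 := hPnz (n + c).+1 ltac:(by move: hn; lia).
  have n6 := hPnz (n + c).+2 ltac:(by move: hn; lia).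
  have n7 := hPrev c.
  have n8 := hPrev c.+1.
  rewrite !addSn !addnS.
  rewrite !sgn_odd !oddM !oddS /=.
  by case: (odd n); case: (odd c) => /=; field; rewrite ?n1 ?n2 ?n3 ?n4 ?n5 ?n6 ?n7 ?n8.
Qed.
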